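(* Let $(E,\mathscr{T},\le)$ be a locally compact $T_2$-preordered Tychonoff space with $G(\le)=\bigcap_{f\in\mathcal{F}}G_f$. Then for every $\mathcal{H}\subseteq\mathcal{F}$ with $G(\le)=\bigcap_{h\in\mathcal{H}}G_h$ we have $i(i(\mathcal{H}))=i(\mathcal{H})$; and if $\mathcal{H}_1\subseteq\mathcal{H}_2\subseteq\mathcal{F}$ with $G(\le)=\bigcap_{h\in\mathcal{H}_1}G_h$, then $i(\mathcal{H}_1)\subseteq i(\mathcal{H}_2)$.
   Context: $T_2$-preordered: the graph $G(\le)=\{(x,y):x\le y\}$ is closed in $E\times E$. $\mathcal{F}$ is the family of continuous isotone functions $f:E\to[0,1]$; $G_f=\{(x,y):f(x)\le f(y)\}$. $\mathcal{C}$ is the family of continuous functions $E\to[0,1]$ constant outside a compact set. For $\mathcal{H}\subseteq\mathcal{F}$ with $G(\le)=\bigcap_{h\in\mathcal{H}}G_h$, the $\mathcal{H}$-compactification is $c:E\to[0,1]^{\mathcal{H}\cup\mathcal{C}}$, $c(x)=(g(x))_{g\in\mathcal{H}\cup\mathcal{C}}$, with $cE$ the closure of $c(E)$, induced product topology, and preorder $x\le_c y$ iff $x_h\le y_h$ for all $h\in\mathcal{H}$. $i(\mathcal{H})$ is the set of $f\in\mathcal{F}$ such that $f\circ c^{-1}:c(E)\to[0,1]$ extends to a continuous isotone function on $(cE,\le_c)$ for the $\mathcal{H}$-compactification $c$; it contains $\mathcal{H}$ and hence also represents $\le$. *)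

(* Defs.v *)
From HB Require Import structures.
From mathcomp Require Import all_boot all_order all_algebra.
From mathcomp Require Import all_classical all_reals all_analysis.
Unset Printing Implicit Defensive.
Import Order.TTheory GRing.Theory Num.Theory.
Import numFieldNormedType.Exports.
Local Open Scope classical_set_scope.
Local Open Scope ring_scope.

Section Defs.
Context {R : realType} {E : topologicalType}.

Definition graph_of (le : E -> E -> Prop) : set (E * E) :=
  [set xy | le xy.1 xy.2].

Definition Gf (f : E -> R) : set (E * E) := [set xy | f xy.1 <= f xy.2].

Definition T2_preorder (le : E -> E -> Prop) : Prop :=
  (forall x, le x x) /\ (forall x y z, le x y -> le y z -> le x z) /\
  closed (graph_of le).

Definition unit_valued (f : E -> R) : Prop := forall x, 0 <= f x <= 1.

Definition Fam (le : E -> E -> Prop) : set (E -> R) :=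
  [set f : E -> R | continuous f /\ unit_valued f /\ (forall x y, le x y -> f x <= f y)].

Definition Cfam : set (E -> R) :=
  [set f : E -> R | continuous f /\ unit_valued f /\
     exists K : set E, compact K /\ exists a : R, forall x, ~ K x -> f x = a].

Definition represents (le : E -> E -> Prop) (H : set (E -> R)) : Prop :=
  graph_of le = \bigcap_(h in H) Gf h.

Definition Idx (H : set (E -> R)) : Type := {g : E -> R | (H `|` Cfam) g}.

(* the map c : E -> [0,1]^(H \cup C), viewed inside R^(H \cup C)
   with the product topology *)
Definition cmap (H : set (E -> R)) (x : E) : {ptws Idx H -> R} :=
  fun g => sval g x.

Definition cE (H : set (E -> R)) : set {ptws Idx H -> R} :=
  closure (range (cmap H)).

Definition le_c (H : set (E -> R)) (u v : {ptws Idx H -> R}) : Prop :=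
  forall (g : Idx H), H (sval g) -> u g <= v g.

Definition iH (le : E -> E -> Prop) (H : set (E -> R)) : set (E -> R) :=
  [set f | Fam le f /\
    exists g : {ptws Idx H -> R} -> R,
      {within cE H, continuous g} /\
      (forall u, cE H u -> 0 <= g u <= 1) /\
      (forall u v, cE H u -> cE H v -> le_c H u v -> g u <= g v) /\
      (forall x, g (cmap H x) = f x)].

End Defs.

(* Main.v *)
Require Import Defs.
From HB Require Import structures.
From mathcomp Require Import all_boot all_order all_algebra.
From mathcomp Require Import all_classical all_reals all_analysis.
Import Order.TTheory GRing.Theory Num.Theory.
Import numFieldNormedType.Exports.
Local Open Scope classical_set_scope.
Local Open Scope ring_scope.



Lemma ptws_cvg (R : realType) (J : Type) (F : set_system {ptws J -> R})
  (f : {ptws J -> R}) : Filter F ->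
  (forall i, (fun g : {ptws J -> R} => g i) @ F --> f i) -> F --> f.
Proof.
move=> FF Fi; apply/cvg_sup => i U.
have /= -> := @nbhsE (initial_topology (fun f : {ptws J -> R} => f i)) f.
case=> B [[C oC <- ?]] /filterS; apply.
apply: (Fi i); apply: open_nbhs_nbhs; split => //.
Qed.

Lemma within_comp (X Y Z : topologicalType) (A : set X) (B : set Y)
  (phi : X -> Y) (g : Y -> Z) :
  {within A, continuous phi} -> {within B, continuous g} ->
  (forall x, A x -> B (phi x)) -> {within A, continuous (g \o phi)}.
Proof.
move=> /subspace_continuousP cphi /subspace_continuousP cg AB.
apply/subspace_continuousP => x Ax W /= Wn.
have := cg _ (AB _ Ax) _ Wn; rewrite /= nbhs_simpl => V.
have := cphi _ Ax _ V; rewrite /= nbhs_simpl => V2.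
have V3 : nbhs x [set z | A z -> B (phi z) -> W (g (phi z))] := V2.
change (nbhs x [set z | A z -> W (g (phi z))]).
by apply: filterS V3 => z Vz Az; exact: (Vz Az (AB _ Az)).
Qed.

Lemma closure_map (X Y : topologicalType) (S : set X) (S' : set Y)
  (phi : X -> Y) :
  {within closure S, continuous phi} ->
  (forall x, S x -> S' (phi x)) ->
  forall u, closure S u -> closure S' (phi u).
Proof.
move=> /subspace_continuousP cphi SS u Su B Bn.
have := cphi _ Su _ Bn; rewrite /= nbhs_simpl => /Su [y [Sy By]].
exists (phi y); split; first exact: SS.
exact: By (subset_closure Sy).
Qed.

Lemma ptws_proj (R : realType) (J : Type) (F : set_system {ptws J -> R})
  (f : {ptws J -> R}) (i : J) : Filter F ->
  F --> f -> (fun g : {ptws J -> R} => g i) @ F --> f i.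
Proof.
move=> FF /cvg_sup /(_ i) Fi U /=. rewrite nbhs_simpl nbhsE => -[B [oB Bf] BU].
have K : nbhs (f : initial_topology (fun f : {ptws J -> R} => f i)) ((fun g : {ptws J -> R} => g i) @^-1` B).
  apply: open_nbhs_nbhs; split => //. by exists B.
have FB : F ((fun g : {ptws J -> R} => g i) @^-1` B) := Fi _ K.
rewrite /=. apply: filterS FB. move=> g /BU. done.
Qed.

Lemma ptws_proj_cont (R : realType) (J : Type) (i : J) :
  continuous (fun g : {ptws J -> R} => g i).
Proof. move=> f. have h := @ptws_proj R J (nbhs f) f i (nbhs_filter f) (cvg_id). exact: h. Qed.


Definition proj12 {R : realType} {E : topologicalType} {H1 H2 : set (E -> R)}
  (sub : H1 `<=` H2) (v : {ptws Idx H2 -> R}) : {ptws Idx H1 -> R} :=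
  fun k => v (exist _ (sval k) (setSU sub (svalP k))).

Lemma proj12_cont (R : realType) (E : topologicalType) (H1 H2 : set (E -> R))
  (sub : H1 `<=` H2) : continuous (proj12 sub).
Proof.
move=> v; apply: (@ptws_cvg _ _ _ _ (fmap_filter _ (nbhs_filter v))) => k.
exact: (@ptws_proj_cont _ _ (exist _ (sval k) (setSU sub (svalP k)) : Idx H2) v).
Qed.

Lemma part2 (R : realType) (E : topologicalType) (le : E -> E -> Prop)
  (H1 H2 : set (E -> R)) : H1 `<=` H2 -> iH le H1 `<=` iH le H2.
Proof.
move=> sub f [Ff [g [gc [g01 [gmon gc1]]]]]; split => //.
have cmapE x : proj12 sub (cmap H2 x) = cmap H1 x by [].
have cEm u : cE H2 u -> cE H1 (proj12 sub u).
  apply: closure_map; first exact/continuous_subspaceT/proj12_cont.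
  by move=> _ [x _ <-]; exists x.
exists (g \o proj12 sub); split; [|split; [|split]].
- apply: within_comp gc cEm; exact/continuous_subspaceT/proj12_cont.
- by move=> u /cEm; apply: g01.
- move=> u v /cEm u1 /cEm v1 luv; apply: gmon => // k Hk.
  exact: (luv (exist _ (sval k) (setSU sub (svalP k))) (sub _ Hk)).
- by move=> x /=; rewrite cmapE.
Qed.

Lemma cE_unit (R : realType) (E : topologicalType) (H : set (E -> R))
  (k : Idx H) : unit_valued (sval k) -> forall u, cE H u -> 0 <= u k <= 1.
Proof.
move=> uk u.
have cl : closed [set u : {ptws Idx H -> R} | 0 <= u k <= 1].
  have -> : [set u : {ptws Idx H -> R} | 0 <= u k <= 1] =
     (fun u : {ptws Idx H -> R} => u k) @^-1` ([set r : R | 0 <= r] `&` [set r | r <= 1]).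
    by apply/seteqP; split => v /=; [move/andP|move=> [-> ->]].
  apply: preimage_closed; first by move=> v _; exact: (@ptws_proj_cont _ _ k v).
  by apply: closedI; [exact: closed_ge|exact: closed_le].
move=> cu.
have sub : range (cmap H) `<=` [set u : {ptws Idx H -> R} | 0 <= u k <= 1].
  by move=> _ [x _ <-]; exact: uk.
have := closureS sub cu; by rewrite -((closure_id _).1 cl).
Qed.


Lemma H_sub_iH (R : realType) (E : topologicalType) (le : E -> E -> Prop)
  (H : set (E -> R)) : H `<=` Fam le -> H `<=` iH le H.
Proof.
move=> HF h Hh; split; first exact: HF.
pose k := (exist _ h (or_introl Hh) : Idx H).
exists (fun u => u k); split; [|split; [|split]].
- apply: continuous_subspaceT; exact: (@ptws_proj_cont _ _ k).
- by move=> u; apply: cE_unit; exact: (HF _ Hh).2.1.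
- by move=> u v _ _ luv; exact: (luv k Hh).
- by [].
Qed.

Definition Gx {R : realType} {E : topologicalType} (le : E -> E -> Prop)
  (H : set (E -> R)) (f : E -> R) : {ptws Idx H -> R} -> R :=
  match pselect (iH le H f) with
  | left p => projT1 (cid (proj2 p))
  | right _ => fun _ => 0
  end.

Lemma GxP (R : realType) (E : topologicalType) (le : E -> E -> Prop)
  (H : set (E -> R)) (f : E -> R) : iH le H f ->
      {within cE H, continuous (Gx le H f)} /\
      (forall u, cE H u -> 0 <= Gx le H f u <= 1) /\
      (forall u v, cE H u -> cE H v -> le_c H u v -> Gx le H f u <= Gx le H f v) /\
      (forall x, Gx le H f (cmap H x) = f x).
Proof. by rewrite /Gx; case: pselect => // p _; exact: (projT2 (cid (proj2 p))). Qed.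

Lemma idxC (R : realType) (E : topologicalType) (le : E -> E -> Prop)
  (H : set (E -> R)) (k : Idx (iH le H)) : ~ iH le H (sval k) -> Cfam (sval k).
Proof. by case: (svalP k). Qed.

Definition Phi {R : realType} {E : topologicalType} (le : E -> E -> Prop)
  (H : set (E -> R)) (u : {ptws Idx H -> R}) : {ptws Idx (iH le H) -> R} :=
  fun k => match pselect (iH le H (sval k)) with
  | left _ => Gx le H (sval k) u
  | right np => u (exist _ (sval k) (or_intror (@idxC _ _ _ _ _ np) : (H `|` Cfam) (sval k)))
  end.

Lemma Phi_coord (R : realType) (E : topologicalType) (le : E -> E -> Prop)
  (H : set (E -> R)) (k : Idx (iH le H)) :
  {within cE H, continuous (fun u => Phi le H u k)}.
Proof.
rewrite /Phi; case: pselect => p.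
  exact: (@GxP _ _ _ _ _ p).1.
apply: continuous_subspaceT; exact: (@ptws_proj_cont _ _ _).
Qed.

Lemma Phi_cont (R : realType) (E : topologicalType) (le : E -> E -> Prop)
  (H : set (E -> R)) : {within cE H, continuous (Phi le H)}.
Proof.
apply/subspace_continuousP => x cx.
apply: (@ptws_cvg _ _ _ _ (fmap_filter _ (within_filter _ (nbhs_filter x)))) => k.
exact: ((subspace_continuousP _ _).1 (@Phi_coord _ _ _ _ k) x cx).
Qed.

Lemma iiH_sub (R : realType) (E : topologicalType) (le : E -> E -> Prop)
  (H : set (E -> R)) : iH le (iH le H) `<=` iH le H.
Proof.
move=> f [Ff [g [gc [g01 [gmon gc1]]]]]; split => //.
have cmapE x : Phi le H (cmap H x) = cmap (iH le H) x.
  apply: functional_extensionality_dep => k; rewrite /Phi.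
  case: pselect => p //; exact: (@GxP _ _ _ _ _ p).2.2.2.
have cEm u : cE H u -> cE (iH le H) (Phi le H u).
  apply: closure_map; first exact: Phi_cont.
  by move=> _ [x _ <-]; exists x => //; rewrite cmapE.
exists (g \o Phi le H); split; [|split; [|split]].
- apply: (@within_comp _ _ _ _ _ _ _ _ gc cEm); exact: Phi_cont.
- by move=> u /cEm; apply: g01.
- move=> u v cu cv luv; apply: gmon; [exact: cEm|exact: cEm|].
  move=> k Hk; rewrite /Phi; case: pselect => // p.
  exact: (@GxP _ _ _ _ _ p).2.2.1.
- by move=> x /=; rewrite cmapE.
Qed.

Theorem mainTheorem15 (R : realType) (E : topologicalType)
  (le : E -> E -> Prop) :
  T2_preorder le ->
  hausdorff_space E ->
  completely_regular_space E ->
  locally_compact [set: E] ->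
  represents le (@Fam R E le) ->
  (forall H : set (E -> R), H `<=` Fam le -> represents le H ->
     iH le (iH le H) = iH le H) /\
  (forall H1 H2 : set (E -> R), H1 `<=` H2 -> H2 `<=` Fam le ->
     represents le H1 -> iH le H1 `<=` iH le H2).
Proof.
move=> _ _ _ _ _; split.
  move=> H HF _; apply/seteqP; split; first exact: iiH_sub.
  exact: (@part2 _ _ _ _ _ (@H_sub_iH _ _ _ _ HF)).
by move=> H1 H2 sub _ _; exact: (@part2 _ _ _ _ _ sub).
Qed.
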